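(* Let $\mathbb{T}=(T,\eta,(\cdot)^\sharp)$ be a Kleene monad on a category $\mathbf{C}$. 1. If $\mathbf{C}$ is cartesian closed and $S$ is an object of $\mathbf{C}$, then the state monad transform $T_S X=(T(X\times S))^S$ is a Kleene monad, where the Kleisli category of $T_S$ is identified with the full subcategory of the Kleisli category of $\mathbb{T}$ on the objects of the form $X\times S$ (via $\mathbf{C}(X,(T(Y\times S))^S)\cong\mathbf{C}(X\times S,T(Y\times S))$), and joins, $\bot$ and Kleene star are inherited from the Kleisli category of $\mathbb{T}$. 2. Suppose $\mathbf{C}$ has finite products, $\mathbb{T}$ is strong with strength $\tau_{X,Y}:X\times TY\to T(X\times Y)$, and $(M,\varepsilon:1\to M,\bullet:M\times M\to M)$ is a monoid object in $\mathbf{C}$. Suppose the strength respects the Kleene monad structure, i.e. for all $f,g:Y\to TY'$ and $k:Y\to TY$ and every object $X$: $\tau\circ(\mathrm{id}_X\times\bot)=\bot$, $\tau\circ(\mathrm{id}_X\times(f\lor g))=\tau\circ(\mathrm{id}_X\times f)\lor\tau\circ(\mathrm{id}_X\times g)$, and $\tau\circ(\mathrm{id}_X\times k^\ast)=(\tau\circ(\mathrm{id}_X\times k))^\ast$ (stars and joins taken in the Kleisli category of $\mathbb{T}$). Then the writer monad transform $T_M X=T(M\times X)$ is a Kleene monad, where: for $f:X\to T(M\times Y)$ one sets $f^\circ:M\times X\to T(M\times Y)$ to be the composite $M\times X\xrightarrow{\tau\circ(\mathrm{id}\times f)}T(M\times(M\times Y))\cong T((M\times M)\times Y)\xrightarrow{T(\bullet\times\mathrm{id})}T(M\times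 Y)$; the unit of $T_M$ is $\eta\circ\langle\varepsilon\circ !,\mathrm{id}\rangle$; the Kleisli composite of $f:X\to T(M\times Y)$ followed by $g:Y\to T(M\times Z)$ is $(g^\circ)^\sharp\circ f$; joins and $\bot$ on $\mathbf{C}(X,T(M\times Y))$ are those of the Kleisli category of $\mathbb{T}$; and the Kleene star of $f:X\to T(M\times X)$ is $(f^\circ)^\ast\circ\eta\circ\langle\varepsilon\circ !,\mathrm{id}\rangle$ (star taken in the Kleisli category of $\mathbb{T}$).
   Context: Monads are given as Kleisli triples $(T,\eta,(\cdot)^\sharp)$ where $f:X\to TY$ is sent to $f^\sharp:TX\to TY$; the Kleisli category has morphisms $X\to TY$, identity $\eta$, and composition $g\cdot f=g^\sharp\circ f$. A Kleene-Kozen category is a category whose hom-sets are join-semilattices with least element $\bot$, with composition preserving binary joins and $\bot$ in each argument, together with an operator $(\cdot)^\ast:\mathbf{C}(X,X)\to\mathbf{C}(X,X)$ such that for all $f:Y\to Y$, $g:Y\to Z$, $h:X\to Y$: $g\circ f^\ast$ is the least prefixpoint of $x\mapsto g\lor x\circ f$ and $f^\ast\circ h$ is the least prefixpoint of $x\mapsto h\lor f\circ x$ (order: $f\le g\iff f\lor g=g$). A monad $\mathbb{T}$ is a Kleene monad if its Kleisli category is a Kleene-Kozen category. The terminal morphism is denoted $!$, pairing by $\langle\cdot,\cdot\rangle$. *)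

(* Defs.v *)
Set Implicit Arguments.
Unset Strict Implicit.

Record Category := {
  Ob :> Type;
  Hom : Ob -> Ob -> Type;
  idm : forall X, Hom X X;
  comp : forall X Y Z, Hom Y Z -> Hom X Y -> Hom X Z;
  comp_id_l : forall X Y (f : Hom X Y), comp (idm Y) f = f;
  comp_id_r : forall X Y (f : Hom X Y), comp f (idm X) = f;
  comp_assoc : forall X Y Z W (f : Hom X Y) (g : Hom Y Z) (h : Hom Z W),
      comp h (comp g f) = comp (comp h g) f }.
Arguments Hom {C} X Y : rename.
Arguments idm {C} X : rename.
Arguments comp {C X Y Z} g f : rename.

Record KTriple (C : Category) := {
  T : C -> C;
  eta : forall X, Hom X (T X);
  sharp : forall X Y, Hom X (T Y) -> Hom (T X) (T Y) }.
Arguments T {C} k X : rename.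
Arguments eta {C} k X : rename.
Arguments sharp {C} k {X Y} f : rename.

Definition is_monad (C : Category) (M : KTriple C) : Prop :=
  (forall X, sharp M (eta M X) = idm (T M X)) /\
  (forall X Y (f : Hom X (T M Y)), comp (sharp M f) (eta M X) = f) /\
  (forall X Y Z (f : Hom X (T M Y)) (g : Hom Y (T M Z)),
      comp (sharp M g) (sharp M f) = sharp M (comp (sharp M g) f)).

Definition KHom (C : Category) (M : KTriple C) (X Y : C) := Hom X (T M Y).
Definition kcomp (C : Category) (M : KTriple C) (X Y Z : C)
  (g : KHom M Y Z) (f : KHom M X Y) : KHom M X Z := comp (sharp M g) f.

Section KK.
Variables (O : Type) (H : O -> O -> Type)
  (cmp : forall X Y Z, H Y Z -> H X Y -> H X Z)
  (join : forall X Y, H X Y -> H X Y -> H X Y)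
  (bot : forall X Y, H X Y)
  (star : forall X, H X X -> H X X).

Definition kle X Y (f g : H X Y) : Prop := join f g = g.

Definition least_prefixpoint X Y (F : H X Y -> H X Y) (a : H X Y) : Prop :=
  kle (F a) a /\ forall x, kle (F x) x -> kle a x.

Record is_KleeneKozen : Prop := {
  kk_join_assoc : forall X Y (f g h : H X Y), join f (join g h) = join (join f g) h;
  kk_join_comm : forall X Y (f g : H X Y), join f g = join g f;
  kk_join_idem : forall X Y (f : H X Y), join f f = f;
  kk_join_bot : forall X Y (f : H X Y), join (bot X Y) f = f;
  kk_comp_join_r : forall X Y Z (g : H Y Z) (f1 f2 : H X Y),
      cmp g (join f1 f2) = join (cmp g f1) (cmp g f2);
  kk_comp_join_l : forall X Y Z (g1 g2 : H Y Z) (f : H X Y),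
      cmp (join g1 g2) f = join (cmp g1 f) (cmp g2 f);
  kk_comp_bot_r : forall X Y Z (g : H Y Z), cmp g (bot X Y) = bot X Z;
  kk_comp_bot_l : forall X Y Z (f : H X Y), cmp (bot Y Z) f = bot X Z;
  kk_star_r : forall Y Z (f : H Y Y) (g : H Y Z),
      least_prefixpoint (fun x => join g (cmp x f)) (cmp g (star f));
  kk_star_l : forall X Y (f : H Y Y) (h : H X Y),
      least_prefixpoint (fun x => join h (cmp f x)) (cmp (star f) h) }.
End KK.

Definition is_KleeneMonad (C : Category) (M : KTriple C)
  (join : forall X Y, KHom M X Y -> KHom M X Y -> KHom M X Y)
  (bot : forall X Y, KHom M X Y)
  (star : forall X, KHom M X X -> KHom M X X) : Prop :=
  is_monad M /\ is_KleeneKozen (@kcomp C M) join bot star.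

Record Terminal (C : Category) := {
  one : C;
  bang : forall X, Hom X one;
  bang_uniq : forall X (f : Hom X one), f = bang X }.
Arguments one {C} t : rename.
Arguments bang {C} t X : rename.

Record Products (C : Category) := {
  prod : C -> C -> C;
  p1 : forall X Y, Hom (prod X Y) X;
  p2 : forall X Y, Hom (prod X Y) Y;
  pair : forall Z X Y, Hom Z X -> Hom Z Y -> Hom Z (prod X Y);
  pair_p1 : forall Z X Y (f : Hom Z X) (g : Hom Z Y), comp (p1 X Y) (pair f g) = f;
  pair_p2 : forall Z X Y (f : Hom Z X) (g : Hom Z Y), comp (p2 X Y) (pair f g) = g;
  pair_uniq : forall Z X Y (h : Hom Z (prod X Y)),
      pair (comp (p1 X Y) h) (comp (p2 X Y) h) = h }.
Arguments prod {C} p X Y : rename.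
Arguments p1 {C} p {X Y} : rename.
Arguments p2 {C} p {X Y} : rename.
Arguments pair {C} p {Z X Y} f g : rename.

Definition fprod (C : Category) (P : Products C) (X Y X' Y' : C)
  (f : Hom X X') (g : Hom Y Y') : Hom (prod P X Y) (prod P X' Y') :=
  pair P (comp f (p1 P)) (comp g (p2 P)).
Arguments fprod {C} P {X Y X' Y'} f g.

Definition assocr (C : Category) (P : Products C) (X Y Z : C)
  : Hom (prod P (prod P X Y) Z) (prod P X (prod P Y Z)) :=
  pair P (comp (p1 P) (p1 P)) (pair P (comp (p2 P) (p1 P)) (p2 P)).
Definition assocl (C : Category) (P : Products C) (X Y Z : C)
  : Hom (prod P X (prod P Y Z)) (prod P (prod P X Y) Z) :=
  pair P (pair P (p1 P) (comp (p1 P) (p2 P))) (comp (p2 P) (p2 P)).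
Arguments assocr {C} P {X Y Z}.
Arguments assocl {C} P {X Y Z}.

(* exponentials: expo B A = B^A *)
Record Exponentials (C : Category) (P : Products C) := {
  expo : C -> C -> C;
  ev : forall A B, Hom (prod P (expo B A) A) B;
  curry : forall Z A B, Hom (prod P Z A) B -> Hom Z (expo B A);
  curry_ev : forall Z A B (f : Hom (prod P Z A) B),
      comp (ev A B) (fprod P (curry f) (idm A)) = f;
  curry_uniq : forall Z A B (g : Hom Z (expo B A)),
      curry (comp (ev A B) (fprod P g (idm A))) = g }.
Arguments expo {C P} e B A : rename.
Arguments ev {C P} e {A B} : rename.
Arguments curry {C P} e {Z A B} f : rename.

Definition uncurry (C : Category) (P : Products C) (E : Exponentials P)
  (X A B : C) (f : Hom X (expo E B A)) : Hom (prod P X A) B :=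
  comp (ev E) (fprod P f (idm A)).
Arguments uncurry {C P} E {X A B} f.

Section State.
Variables (C : Category) (P : Products C) (E : Exponentials P)
  (M : KTriple C) (S : C).

Definition state_triple : KTriple C := {|
  T := fun X => expo E (T M (prod P X S)) S;
  eta := fun X => curry E (eta M (prod P X S));
  sharp := fun X Y f => curry E (comp (sharp M (uncurry E f)) (ev E)) |}.

Variables (join : forall X Y, KHom M X Y -> KHom M X Y -> KHom M X Y)
  (bot : forall X Y, KHom M X Y)
  (star : forall X, KHom M X X -> KHom M X X).

Definition state_join X Y (f g : KHom state_triple X Y) : KHom state_triple X Y :=
  curry E (join (uncurry E f) (uncurry E g)).
Definition state_bot X Y : KHom state_triple X Y :=
  curry E (bot (prod P X S) (prod P Y S)).
Definition state_star X (f : KHom state_triple X X) : KHom state_triple X X :=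
  curry E (star (uncurry E f)).
End State.

Definition Tmap (C : Category) (M : KTriple C) (X Y : C) (h : Hom X Y)
  : Hom (T M X) (T M Y) := sharp M (comp (eta M Y) h).
Arguments Tmap {C} M {X Y} h.

Definition is_strength (C : Category) (One : Terminal C) (P : Products C)
  (M : KTriple C) (tau : forall X Y, Hom (prod P X (T M Y)) (T M (prod P X Y)))
  : Prop :=
  (forall X Y, comp (tau X Y) (fprod P (idm X) (eta M Y)) = eta M (prod P X Y)) /\
  (forall X Y Z (f : Hom Y (T M Z)),
     comp (tau X Z) (fprod P (idm X) (sharp M f))
     = comp (sharp M (comp (tau X Z) (fprod P (idm X) f))) (tau X Y)) /\
  (forall X X' Y (g : Hom X X'),
     comp (Tmap M (fprod P g (idm Y))) (tau X Y) = comp (tau X' Y) (fprod P g (idm (T M Y)))) /\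
  (forall Y, comp (Tmap M (p2 P)) (tau (one One) Y) = p2 P) /\
  (forall X Y Z,
     comp (Tmap M (assocr P)) (tau (prod P X Y) Z)
     = comp (tau X (prod P Y Z)) (comp (fprod P (idm X) (tau Y Z)) (assocr P))).

Definition is_monoid (C : Category) (One : Terminal C) (P : Products C)
  (Mo : C) (e : Hom (one One) Mo) (mu : Hom (prod P Mo Mo) Mo) : Prop :=
  comp mu (pair P (comp e (bang One Mo)) (idm Mo)) = idm Mo /\
  comp mu (pair P (idm Mo) (comp e (bang One Mo))) = idm Mo /\
  comp mu (fprod P mu (idm Mo)) = comp mu (comp (fprod P (idm Mo) mu) (assocr P)).

Section Writer.
Variables (C : Category) (One : Terminal C) (P : Products C) (M : KTriple C)
  (tau : forall X Y, Hom (prod P X (T M Y)) (T M (prod P X Y)))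
  (Mo : C) (e : Hom (one One) Mo) (mu : Hom (prod P Mo Mo) Mo).

Definition wcirc (X Y : C) (f : Hom X (T M (prod P Mo Y)))
  : Hom (prod P Mo X) (T M (prod P Mo Y)) :=
  comp (Tmap M (fprod P mu (idm Y)))
    (comp (Tmap M (assocl P)) (comp (tau Mo (prod P Mo Y)) (fprod P (idm Mo) f))).

Definition writer_eta (X : C) : Hom X (T M (prod P Mo X)) :=
  comp (eta M (prod P Mo X)) (pair P (comp e (bang One X)) (idm X)).

Definition writer_triple : KTriple C := {|
  T := fun X => T M (prod P Mo X);
  eta := writer_eta;
  sharp := fun X Y f => sharp M (wcirc f) |}.

Variables (join : forall X Y, KHom M X Y -> KHom M X Y -> KHom M X Y)
  (bot : forall X Y, KHom M X Y)
  (star : forall X, KHom M X X -> KHom M X X).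

Definition writer_join X Y (f g : KHom writer_triple X Y) : KHom writer_triple X Y :=
  join f g.
Definition writer_bot X Y : KHom writer_triple X Y := bot X (prod P Mo Y).
Definition writer_star X (f : KHom writer_triple X X) : KHom writer_triple X X :=
  kcomp (star (wcirc f)) (writer_eta X).
End Writer.

(* Main.v *)
Require Import Defs.
Set Implicit Arguments.
Unset Strict Implicit.

Section Basic.
Variable C : Category.
Variable P : Products C.

Lemma pair_comp (Z Z' X Y : C) (f : Hom Z X) (g : Hom Z Y) (h : Hom Z' Z) :
  comp (pair P f g) h = pair P (comp f h) (comp g h).
Proof.
  rewrite <- (pair_uniq (comp (pair P f g) h)).
  rewrite !comp_assoc, pair_p1, pair_p2. reflexivity.
Qed.

Lemma pair_ext (Z X Y : C) (a b : Hom Z (prod P X Y)) :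
  comp (p1 P) a = comp (p1 P) b -> comp (p2 P) a = comp (p2 P) b -> a = b.
Proof.
  intros H1 H2. rewrite <- (pair_uniq a), <- (pair_uniq b), H1, H2. reflexivity.
Qed.

Lemma pair_p12 (X Y : C) : pair P (p1 P) (p2 P) = idm (prod P X Y).
Proof.
  apply pair_ext; rewrite pair_p1 || rewrite pair_p2; rewrite comp_id_r; reflexivity.
Qed.
End Basic.

Ltac psimpl := repeat progress (rewrite ?comp_id_l, ?comp_id_r, <- ?comp_assoc, ?pair_comp, ?pair_p1, ?pair_p2).

Section KKlemmas.
Variables (O : Type) (H : O -> O -> Type)
  (cmp : forall X Y Z, H Y Z -> H X Y -> H X Z)
  (join : forall X Y, H X Y -> H X Y -> H X Y)
  (bot : forall X Y, H X Y)
  (star : forall X, H X X -> H X X).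
Hypothesis KK : is_KleeneKozen cmp join bot star.

Lemma kle_refl X Y (f : H X Y) : kle join f f.
Proof. apply (kk_join_idem KK). Qed.
Lemma kle_trans X Y (f g h : H X Y) : kle join f g -> kle join g h -> kle join f h.
Proof. unfold kle; intros A B. rewrite <- B, (kk_join_assoc KK), A. reflexivity. Qed.
Lemma kle_antisym X Y (f g : H X Y) : kle join f g -> kle join g f -> f = g.
Proof. unfold kle; intros A B. transitivity (join g f); [symmetry; exact B|]. rewrite (kk_join_comm KK); exact A. Qed.
Lemma kle_join_l X Y (f g h : H X Y) : kle join f h -> kle join g h -> kle join (join f g) h.
Proof. unfold kle; intros A B. rewrite <- (kk_join_assoc KK), B, A. reflexivity. Qed.
Lemma kle_join_ub1 X Y (f g : H X Y) : kle join f (join f g).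
Proof. unfold kle. rewrite (kk_join_assoc KK), (kk_join_idem KK). reflexivity. Qed.
Lemma kle_join_ub2 X Y (f g : H X Y) : kle join g (join f g).
Proof. rewrite (kk_join_comm KK). apply kle_join_ub1. Qed.
Lemma kle_join_mono X Y (f f' g g' : H X Y) : kle join f f' -> kle join g g' -> kle join (join f g) (join f' g').
Proof. intros. apply kle_join_l; eapply kle_trans; eauto using kle_join_ub1, kle_join_ub2. Qed.
Lemma kle_comp_l X Y Z (g : H Y Z) (f f' : H X Y) : kle join f f' -> kle join (cmp g f) (cmp g f').
Proof. unfold kle; intros A. rewrite <- (kk_comp_join_r KK), A. reflexivity. Qed.
Lemma kle_comp_r X Y Z (g g' : H Y Z) (f : H X Y) : kle join g g' -> kle join (cmp g f) (cmp g' f).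
Proof. unfold kle; intros A. rewrite <- (kk_comp_join_l KK), A. reflexivity. Qed.
End KKlemmas.

Section StateP.
Variables (C : Category) (P : Products C) (E : Exponentials P) (M : KTriple C) (S : C).
Variables (join : forall X Y, KHom M X Y -> KHom M X Y -> KHom M X Y)
  (bot : forall X Y, KHom M X Y)
  (star : forall X, KHom M X X -> KHom M X X).
Hypothesis HK : is_KleeneMonad join bot star.

Lemma U_C (X A B : C) (f : Hom (prod P X A) B) : uncurry E (curry E f) = f.
Proof. apply curry_ev. Qed.
Lemma C_U (X A B : C) (f : Hom X (expo E B A)) : curry E (uncurry E f) = f.
Proof. apply curry_uniq. Qed.
Lemma U_inj (X A B : C) (f g : Hom X (expo E B A)) : uncurry E f = uncurry E g -> f = g.
Proof. intros H. rewrite <- (C_U f), <- (C_U g), H. reflexivity. Qed.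

Lemma fprod_comp_id (X Y Z A : C) (a : Hom Y Z) (b : Hom X Y) :
  fprod P (comp a b) (idm A) = comp (fprod P a (idm A)) (fprod P b (idm A)).
Proof.
  unfold fprod. apply pair_ext; psimpl; reflexivity.
Qed.

Lemma U_comp (X Y A B : C) (g : Hom Y (expo E B A)) (f : Hom X Y) :
  uncurry E (comp g f) = comp (uncurry E g) (fprod P f (idm A)).
Proof. unfold uncurry. rewrite fprod_comp_id, comp_assoc. reflexivity. Qed.

Notation ST := (state_triple E M S).

Lemma U_kcomp X Y Z (g : KHom ST Y Z) (f : KHom ST X Y) :
  uncurry E (kcomp g f) = kcomp (uncurry E g) (uncurry E f).
Proof.
  unfold kcomp; simpl. rewrite U_comp. rewrite U_C. unfold uncurry.
  rewrite <- comp_assoc. reflexivity.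
Qed.

Lemma U_join X Y (f g : KHom ST X Y) :
  uncurry E (state_join join f g) = join (uncurry E f) (uncurry E g).
Proof. apply U_C. Qed.
Lemma U_bot X Y : uncurry E (state_bot E S bot X Y) = bot (prod P X S) (prod P Y S).
Proof. apply U_C. Qed.
Lemma U_star X (f : KHom ST X X) : uncurry E (state_star star f) = star (uncurry E f).
Proof. apply U_C. Qed.

Lemma kle_S X Y (f g : KHom ST X Y) :
  kle (state_join join) f g <-> kle join (uncurry E f) (uncurry E g).
Proof.
  unfold kle. split; intro H.
  - rewrite <- U_join, H. reflexivity.
  - apply U_inj. rewrite U_join. exact H.
Qed.

Lemma lpp_S X Y (F : KHom ST X Y -> KHom ST X Y) (G : KHom M (prod P X S) (prod P Y S) -> KHom M (prod P X S) (prod P Y S)) a :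
  (forall x, uncurry E (F x) = G (uncurry E x)) ->
  least_prefixpoint join G (uncurry E a) -> least_prefixpoint (state_join join) F a.
Proof.
  intros HF [H1 H2]. split.
  - apply kle_S. rewrite HF. exact H1.
  - intros x Hx. apply kle_S. apply H2. rewrite <- HF. apply kle_S. exact Hx.
Qed.

Lemma state_ok : is_KleeneMonad (M := ST) (state_join join) (state_bot E S bot) (state_star star).
Proof.
  destruct HK as [[m1 [m2 m3]] KK].
  split; [split; [|split]|].
  - intro X. simpl. rewrite U_C, m1, comp_id_l.
    apply U_inj. rewrite U_C. unfold uncurry. unfold fprod.
    rewrite !comp_id_l, pair_p12, comp_id_r. reflexivity.
  - intros X Y f. apply U_inj. pose proof (U_kcomp f (eta ST X)) as H.
    unfold kcomp in H. rewrite H. simpl. rewrite U_C. apply m2.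
  - intros X Y Z f g. apply U_inj.
    rewrite U_comp. simpl. rewrite !U_C.
    rewrite <- comp_assoc. rewrite curry_ev. rewrite comp_assoc, m3.
    change (comp (sharp M (uncurry E g)) (uncurry E f)) with (kcomp (uncurry E g) (uncurry E f)).
    rewrite <- U_kcomp. reflexivity.
  - constructor.
    + intros. apply U_inj. rewrite !U_join. apply (kk_join_assoc KK).
    + intros. apply U_inj. rewrite !U_join. apply (kk_join_comm KK).
    + intros. apply U_inj. rewrite !U_join. apply (kk_join_idem KK).
    + intros. apply U_inj. rewrite !U_join, U_bot. apply (kk_join_bot KK).
    + intros. apply U_inj. rewrite U_kcomp, !U_join, !U_kcomp. apply (kk_comp_join_r KK).
    + intros. apply U_inj. rewrite U_kcomp, !U_join, !U_kcomp. apply (kk_comp_join_l KK).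
    + intros. apply U_inj. rewrite U_kcomp, !U_bot. apply (kk_comp_bot_r KK).
    + intros. apply U_inj. rewrite U_kcomp, !U_bot. apply (kk_comp_bot_l KK).
    + intros Y Z f g. apply (lpp_S (G := fun y => join (uncurry E g) (kcomp y (uncurry E f)))).
      * intro x. rewrite U_join, U_kcomp. reflexivity.
      * rewrite U_kcomp, U_star. apply (kk_star_r KK).
    + intros X Y f h. apply (lpp_S (G := fun y => join (uncurry E h) (kcomp (uncurry E f) y))).
      * intro x. rewrite U_join, U_kcomp. reflexivity.
      * rewrite U_kcomp, U_star. apply (kk_star_l KK).
Qed.
End StateP.

Lemma bang_comp (C : Category) (One : Terminal C) (X Y : C) (h : Hom X Y) :
  comp (bang One Y) h = bang One X.
Proof. apply bang_uniq. Qed.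

Ltac psimpl2 := repeat progress (rewrite ?comp_id_l, ?comp_id_r, <- ?comp_assoc, ?pair_comp, ?pair_p1, ?pair_p2, ?bang_comp).

Section WriterP.
Variables (C : Category) (One : Terminal C) (P : Products C) (M : KTriple C)
  (tau : forall X Y, Hom (prod P X (T M Y)) (T M (prod P X Y)))
  (Mo : C) (e : Hom (one One) Mo) (mu : Hom (prod P Mo Mo) Mo).
Variables (join : forall X Y, KHom M X Y -> KHom M X Y -> KHom M X Y)
  (bot : forall X Y, KHom M X Y)
  (star : forall X, KHom M X X -> KHom M X X).
Hypothesis HK : is_KleeneMonad join bot star.
Hypothesis Hst : is_strength One tau.
Hypothesis Hmo : is_monoid e mu.

Lemma m1 X : sharp M (eta M X) = idm (T M X).
Proof. apply (proj1 (proj1 HK)). Qed.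
Lemma m2 X Y (f : Hom X (T M Y)) : comp (sharp M f) (eta M X) = f.
Proof. apply (proj1 (proj2 (proj1 HK))). Qed.
Lemma m3 X Y Z (f : Hom X (T M Y)) (g : Hom Y (T M Z)) :
      comp (sharp M g) (sharp M f) = sharp M (comp (sharp M g) f).
Proof. apply (proj2 (proj2 (proj1 HK))). Qed.
Lemma KK : is_KleeneKozen (@kcomp C M) join bot star.
Proof. apply (proj2 HK). Qed.

Lemma kc_eta_l X Y (f : KHom M X Y) : kcomp (eta M Y) f = f.
Proof. unfold kcomp. rewrite m1. apply comp_id_l. Qed.
Lemma kc_eta_r X Y (f : KHom M X Y) : kcomp f (eta M X) = f.
Proof. apply m2. Qed.
Lemma kc_assoc X Y Z W (f : KHom M X Y) (g : KHom M Y Z) (h : KHom M Z W) :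
  kcomp h (kcomp g f) = kcomp (kcomp h g) f.
Proof. unfold kcomp. rewrite comp_assoc, m3. reflexivity. Qed.
Lemma kc_etah X Y Z (g : KHom M Y Z) (h : Hom X Y) : kcomp g (comp (eta M Y) h) = comp g h.
Proof. unfold kcomp. rewrite comp_assoc, m2. reflexivity. Qed.
Lemma comp_kc X Y Z W (g : KHom M Y Z) (f : KHom M X Y) (h : Hom W X) :
  comp (kcomp g f) h = kcomp g (comp f h).
Proof. unfold kcomp. rewrite comp_assoc. reflexivity. Qed.
Lemma kc_etah2 X Y Z W (a : Hom Y Z) (b : Hom X Y) (f : KHom M W X) :
  kcomp (comp (eta M Z) a) (kcomp (comp (eta M Y) b) f) = kcomp (comp (eta M Z) (comp a b)) f.
Proof. rewrite kc_assoc, kc_etah, comp_assoc. reflexivity. Qed.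
Lemma Tmap_kc X Y Z (h : Hom Y Z) (x : Hom X (T M Y)) : comp (Tmap M h) x = kcomp (comp (eta M Z) h) x.
Proof. reflexivity. Qed.

Lemma fprod_id_comp (X A B D : C) (a : Hom B D) (b : Hom A B) :
  fprod P (idm X) (comp a b) = comp (fprod P (idm X) a) (fprod P (idm X) b).
Proof. unfold fprod. apply pair_ext; psimpl2; reflexivity. Qed.

Definition L X A B (f : KHom M A B) : KHom M (prod P X A) (prod P X B) :=
  comp (tau X B) (fprod P (idm X) f).

Lemma L_eta X A : L X (eta M A) = eta M (prod P X A).
Proof. apply (proj1 Hst). Qed.
Lemma L_comp X A B D (f : KHom M B D) (h : Hom A B) :
  L X (comp f h) = comp (L X f) (fprod P (idm X) h).
Proof. unfold L. rewrite fprod_id_comp, comp_assoc. reflexivity. Qed.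
Lemma L_etah X A B (h : Hom A B) : L X (comp (eta M B) h) = comp (eta M _) (fprod P (idm X) h).
Proof. rewrite L_comp, L_eta. reflexivity. Qed.
Lemma L_kc X A B D (g : KHom M B D) (f : KHom M A B) : L X (kcomp g f) = kcomp (L X g) (L X f).
Proof.
  unfold L, kcomp. rewrite fprod_id_comp, comp_assoc.
  rewrite (proj1 (proj2 Hst)). rewrite <- comp_assoc. reflexivity.
Qed.

Definition act Y : Hom (prod P Mo (prod P Mo Y)) (prod P Mo Y) :=
  comp (fprod P mu (idm Y)) (assocl P).

Lemma wcirc_eq X Y (f : Hom X (T M (prod P Mo Y))) :
  wcirc tau mu f = kcomp (comp (eta M _) (act Y)) (L Mo f).
Proof.
  unfold wcirc. rewrite !Tmap_kc. unfold act.
  rewrite <- (kc_etah2 (fprod P mu (idm Y)) (assocl P)). reflexivity.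
Qed.

Lemma mu_runit Z (x : Hom Z Mo) : comp mu (pair P x (comp e (bang One Z))) = x.
Proof.
  transitivity (comp (comp mu (pair P (idm Mo) (comp e (bang One Mo)))) x).
  - psimpl2. reflexivity.
  - rewrite (proj1 (proj2 Hmo)). apply comp_id_l.
Qed.
Lemma mu_lunit Z (x : Hom Z Mo) : comp mu (pair P (comp e (bang One Z)) x) = x.
Proof.
  transitivity (comp (comp mu (pair P (comp e (bang One Mo)) (idm Mo))) x).
  - psimpl2. reflexivity.
  - rewrite (proj1 Hmo). apply comp_id_l.
Qed.
Lemma mu_assoc Z (a b c : Hom Z Mo) :
  comp mu (pair P (comp mu (pair P a b)) c) = comp mu (pair P a (comp mu (pair P b c))).
Proof.
  pose proof (f_equal (fun h => comp h (pair P (pair P a b) c)) (proj2 (proj2 Hmo))) as H.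
  simpl in H. unfold fprod, assocr in H.
  repeat progress (rewrite ?comp_id_l, ?comp_id_r, <- ?comp_assoc, ?pair_comp, ?pair_p1, ?pair_p2 in H). exact H.
Qed.

Ltac pcrush := psimpl2; rewrite ?mu_runit, ?mu_lunit, ?mu_assoc; psimpl2;
  first [ reflexivity
        | (etransitivity; [apply bang_uniq | symmetry; apply bang_uniq])
        | (apply pair_ext; pcrush) ].

Lemma Q1 X : comp (act X) (fprod P (idm Mo) (pair P (comp e (bang One X)) (idm X))) = idm _.
Proof. unfold act, fprod, assocl. pcrush. Qed.
Lemma Q2 Y : comp (act Y) (comp (fprod P e (idm (prod P Mo Y))) (pair P (bang One _) (idm _))) = idm _.
Proof. unfold act, fprod, assocl. pcrush. Qed.
Lemma Q3 Z : comp (act Z) (fprod P (idm Mo) (act Z)) = comp (act Z) (act (prod P Mo Z)).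
Proof. unfold act, fprod, assocl. pcrush. Qed.
Lemma Q4 Y B (g : Hom Y B) : comp (assocr P) (comp (fprod P (idm (prod P Mo Mo)) g) (assocl P))
   = fprod P (idm Mo) (fprod P (idm Mo) g).
Proof. unfold fprod, assocl, assocr. pcrush. Qed.
Lemma Q5 X Y Z : comp (assocl P) (assocr P) = idm (prod P (prod P X Y) Z).
Proof. unfold fprod, assocl, assocr. pcrush. Qed.
Lemma Q6 Y : comp (pair P (bang One Y) (idm Y)) (p2 P) = idm (prod P (one One) Y).
Proof. pcrush. Qed.

Lemma Tmap_comp X Y Z (a : Hom Y Z) (b : Hom X Y) : comp (Tmap M a) (Tmap M b) = Tmap M (comp a b).
Proof. unfold Tmap. rewrite m3, comp_assoc, m2, comp_assoc. reflexivity. Qed.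
Lemma Tmap_id X : Tmap M (idm X) = idm _.
Proof. unfold Tmap. rewrite comp_id_r. apply m1. Qed.

Lemma tau1 Y : tau (one One) Y = comp (Tmap M (pair P (bang One Y) (idm Y))) (p2 P).
Proof.
  rewrite <- (proj1 (proj2 (proj2 (proj2 Hst))) Y).
  rewrite comp_assoc, Tmap_comp, Q6, Tmap_id, comp_id_l. reflexivity.
Qed.

Lemma tauXY X Y B : tau (prod P X Y) B =
  comp (Tmap M (assocl P)) (comp (tau X (prod P Y B)) (comp (fprod P (idm X) (tau Y B)) (assocr P))).
Proof.
  rewrite <- (proj2 (proj2 (proj2 (proj2 Hst))) X Y B).
  rewrite comp_assoc, Tmap_comp, Q5, Tmap_id, comp_id_l. reflexivity.
Qed.

Lemma nat_tau X X' Y (g : Hom X X') :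
  comp (tau X' Y) (fprod P g (idm (T M Y))) = comp (Tmap M (fprod P g (idm Y))) (tau X Y).
Proof. symmetry. apply (proj1 (proj2 (proj2 Hst))). Qed.

Definition weta X := writer_eta P M e X.
Definition u X : Hom X (prod P Mo X) := pair P (comp e (bang One X)) (idm X).

Lemma P2 X Y (f : Hom X (T M (prod P Mo Y))) : comp (wcirc tau mu f) (u X) = f.
Proof.
  rewrite wcirc_eq, comp_kc. unfold L, u.
  assert (E1 : comp (comp (tau Mo (prod P Mo Y)) (fprod P (idm Mo) f)) (pair P (comp e (bang One X)) (idm X))
    = comp (comp (tau Mo (prod P Mo Y)) (fprod P e (idm (T M (prod P Mo Y)))))
        (pair P (bang One X) f)).
  { unfold fprod. rewrite <- !comp_assoc. f_equal. psimpl2. reflexivity. }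
  rewrite E1, nat_tau, tau1.
  assert (E2 : comp (comp (Tmap M (fprod P e (idm (prod P Mo Y))))
      (comp (Tmap M (pair P (bang One (prod P Mo Y)) (idm (prod P Mo Y)))) (p2 P))) (pair P (bang One X) f)
    = kcomp (comp (eta M _) (comp (fprod P e (idm (prod P Mo Y))) (pair P (bang One (prod P Mo Y)) (idm (prod P Mo Y))))) f).
  { rewrite comp_assoc, Tmap_comp, <- comp_assoc, pair_p2. reflexivity. }
  rewrite E2, kc_etah2, Q2, comp_id_r. apply kc_eta_l.
Qed.

Lemma swap_fprod Y B (g : Hom Y B) :
  comp (fprod P (idm Mo) g) (comp (fprod P mu (idm Y)) (assocl P))
  = comp (fprod P mu (idm B)) (comp (fprod P (idm (prod P Mo Mo)) g) (assocl P)).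
Proof. unfold fprod, assocl. pcrush. Qed.

Lemma Lact Y Z (g : Hom Y (T M (prod P Mo Z))) :
  comp (L Mo g) (act Y) = kcomp (comp (eta M _) (act (prod P Mo Z))) (L Mo (L Mo g)).
Proof.
  unfold L, act at 1. rewrite <- comp_assoc, swap_fprod, comp_assoc, nat_tau, tauXY.
  rewrite <- !comp_assoc. rewrite Q4, <- fprod_id_comp.
  rewrite !Tmap_kc, kc_etah2. reflexivity.
Qed.

Lemma lin_circ Y Z (g : Hom Y (T M (prod P Mo Z))) :
  kcomp (comp (eta M _) (act Z)) (L Mo (wcirc tau mu g)) = comp (wcirc tau mu g) (act Y).
Proof.
  rewrite !wcirc_eq, L_kc, L_etah, kc_etah2, comp_kc, Lact, kc_etah2, Q3. reflexivity.
Qed.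

Lemma star_unf_l X (f : KHom M X X) : kle join (join (eta M X) (kcomp f (star f))) (star f).
Proof.
  destruct (kk_star_l KK f (eta M X)) as [H _]. rewrite kc_eta_r in H. exact H.
Qed.
Lemma star_unf_r X (f : KHom M X X) : kle join (join (eta M X) (kcomp (star f) f)) (star f).
Proof.
  destruct (kk_star_r KK f (eta M X)) as [H _]. rewrite kc_eta_l in H. exact H.
Qed.

Lemma commute A B (p : KHom M A B) (a : KHom M B B) (b : KHom M A A) :
  kcomp p b = kcomp a p -> kcomp p (star b) = kcomp (star a) p.
Proof.
  intro Hc. pose proof KK as K. apply (kle_antisym K).
  - destruct (kk_star_r K b p) as [_ H]. apply H.
    rewrite <- kc_assoc, Hc, kc_assoc.
    eapply (kle_trans K); [|apply (kle_comp_r K), star_unf_r].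
    rewrite (kk_comp_join_l K), kc_eta_l. apply (kle_refl K).
  - destruct (kk_star_l K a p) as [_ H]. apply H.
    rewrite kc_assoc, <- Hc, <- kc_assoc.
    eapply (kle_trans K); [|apply (kle_comp_l K), star_unf_l].
    rewrite (kk_comp_join_r K), kc_eta_r. apply (kle_refl K).
Qed.

Hypothesis Hb : forall X Y Y', comp (tau X Y') (fprod P (idm X) (bot Y Y')) = bot (prod P X Y) (prod P X Y').
Hypothesis Hj : forall X Y Y' (f g : KHom M Y Y'),
        comp (tau X Y') (fprod P (idm X) (join f g))
        = join (comp (tau X Y') (fprod P (idm X) f)) (comp (tau X Y') (fprod P (idm X) g)).
Hypothesis Hs : forall X Y (k : KHom M Y Y),
        comp (tau X Y) (fprod P (idm X) (star k))
        = star (comp (tau X Y) (fprod P (idm X) k)).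

Lemma lin_star Y (a : KHom M (prod P Mo Y) (prod P Mo Y)) :
  kcomp (comp (eta M _) (act Y)) (L Mo a) = comp a (act Y) ->
  kcomp (comp (eta M _) (act Y)) (L Mo (star a)) = comp (star a) (act Y).
Proof.
  intro H. unfold L at 1. rewrite Hs. fold (L Mo a).
  rewrite <- (kc_etah (star a) (act Y)). apply commute. rewrite kc_etah. exact H.
Qed.

Lemma P1 X Y Z (g : Hom Y (T M (prod P Mo Z))) (f : Hom X (T M (prod P Mo Y))) :
  wcirc tau mu (kcomp (wcirc tau mu g) f) = kcomp (wcirc tau mu g) (wcirc tau mu f).
Proof.
  rewrite (wcirc_eq (kcomp _ f)), L_kc, kc_assoc, lin_circ.
  rewrite (wcirc_eq f), kc_assoc, kc_etah. reflexivity.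
Qed.

Lemma circ_u Y (a : KHom M (prod P Mo Y) (prod P Mo Y)) :
  kcomp (comp (eta M _) (act Y)) (L Mo a) = comp a (act Y) ->
  wcirc tau mu (comp a (u Y)) = a.
Proof.
  intro H. rewrite wcirc_eq, L_comp, <- comp_kc, H, <- comp_assoc. unfold u. rewrite Q1. apply comp_id_r.
Qed.

Lemma P4 X (f : Hom X (T M (prod P Mo X))) :
  wcirc tau mu (kcomp (star (wcirc tau mu f)) (writer_eta P M e X)) = star (wcirc tau mu f).
Proof.
  unfold writer_eta. rewrite kc_etah. apply circ_u. apply lin_star. apply lin_circ.
Qed.

Lemma P5 X : wcirc tau mu (writer_eta P M e X) = eta M _.
Proof.
  unfold writer_eta. rewrite wcirc_eq, L_etah, kc_etah, <- comp_assoc, Q1. apply comp_id_r.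
Qed.

Lemma P2' X Y (f : Hom X (T M (prod P Mo Y))) : kcomp (wcirc tau mu f) (writer_eta P M e X) = f.
Proof. unfold writer_eta. rewrite kc_etah. apply P2. Qed.

Lemma P3j X Y (f g : Hom X (T M (prod P Mo Y))) :
  wcirc tau mu (join f g) = join (wcirc tau mu f) (wcirc tau mu g).
Proof. rewrite !wcirc_eq. unfold L. rewrite Hj. apply (kk_comp_join_r KK). Qed.
Lemma P3b X Y : wcirc tau mu (bot X (prod P Mo Y)) = bot _ _.
Proof. rewrite !wcirc_eq. unfold L. rewrite Hb. apply (kk_comp_bot_r KK). Qed.

Notation WT := (writer_triple tau e mu).

Lemma wcirc_mono X Y (f g : Hom X (T M (prod P Mo Y))) :
  kle join f g -> kle join (wcirc tau mu f) (wcirc tau mu g).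
Proof. unfold kle. intro H. rewrite <- P3j, H. reflexivity. Qed.

Lemma writer_ok : is_KleeneMonad (M := WT) (writer_join join) (writer_bot tau e mu bot) (writer_star star).
Proof.
  pose proof KK as K.
  split; [split; [|split]|].
  - intro X. simpl. rewrite P5. apply m1.
  - intros X Y f. apply P2'.
  - intros X Y Z f g. simpl. rewrite m3.
    change (comp (sharp M (wcirc tau mu g)) f) with (kcomp (wcirc tau mu g) f).
    rewrite P1. reflexivity.
  - constructor.
    + intros. apply (kk_join_assoc K).
    + intros. apply (kk_join_comm K).
    + intros. apply (kk_join_idem K).
    + intros. apply (kk_join_bot K).
    + intros. apply (kk_comp_join_r K).
    + intros X Y Z g1 g2 f. change (kcomp (wcirc tau mu (join g1 g2)) f = join (kcomp (wcirc tau mu g1) f) (kcomp (wcirc tau mu g2) f)).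
      rewrite P3j. apply (kk_comp_join_l K).
    + intros. apply (kk_comp_bot_r K).
    + intros X Y Z f. change (kcomp (wcirc tau mu (bot Y (prod P Mo Z))) f = bot X (prod P Mo Z)).
      rewrite P3b. apply (kk_comp_bot_l K).
    + intros Y Z f g.
      change (least_prefixpoint join (fun x : Hom Y (T M (prod P Mo Z)) => join g (kcomp (wcirc tau mu x) f))
        (kcomp (wcirc tau mu g) (kcomp (star (wcirc tau mu f)) (writer_eta P M e Y)))).
      rewrite kc_assoc.
      set (a := kcomp (wcirc tau mu g) (star (wcirc tau mu f))).
      assert (Ha : wcirc tau mu (kcomp a (writer_eta P M e Y)) = a).
      { unfold a. rewrite <- kc_assoc, P1, P4. reflexivity. }
      destruct (kk_star_r K (wcirc tau mu f) (wcirc tau mu g)) as [H1 H2]. fold a in H1, H2.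
      split.
      * rewrite Ha. pose proof (kle_comp_r K (writer_eta P M e Y) H1) as H3.
        rewrite (kk_comp_join_l K), P2', <- kc_assoc, P2' in H3. exact H3.
      * intros x Hx. rewrite <- (P2' x). apply (kle_comp_r K).
        apply H2. apply wcirc_mono in Hx. rewrite P3j, P1 in Hx. exact Hx.
    + intros X Y f h.
      change (least_prefixpoint join (fun x : Hom X (T M (prod P Mo Y)) => join h (kcomp (wcirc tau mu f) x))
        (kcomp (wcirc tau mu (kcomp (star (wcirc tau mu f)) (writer_eta P M e Y))) h)).
      rewrite P4. apply (kk_star_l K).
Qed.
End WriterP.
Theorem proposition3 (C : Category) (M : KTriple C)
  (join : forall X Y, KHom M X Y -> KHom M X Y -> KHom M X Y)
  (bot : forall X Y, KHom M X Y)
  (star : forall X, KHom M X X -> KHom M X X) :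
  is_KleeneMonad join bot star ->
  (* 1. state monad transform *)
  (forall (One : Terminal C) (P : Products C) (E : Exponentials P) (S : C),
     @is_KleeneMonad C (@state_triple C P E M S)
       (@state_join C P E M S join) (@state_bot C P E M S bot)
       (@state_star C P E M S star)) /\
  (* 2. writer monad transform *)
  (forall (One : Terminal C) (P : Products C)
     (tau : forall X Y, Hom (prod P X (T M Y)) (T M (prod P X Y)))
     (Mo : C) (e : Hom (one One) Mo) (mu : Hom (prod P Mo Mo) Mo),
     @is_strength C One P M tau ->
     @is_monoid C One P Mo e mu ->
     (forall X Y Y', comp (tau X Y') (fprod P (idm X) (bot Y Y')) = bot (prod P X Y) (prod P X Y')) ->
     (forall X Y Y' (f g : KHom M Y Y'),
        comp (tau X Y') (fprod P (idm X) (join Y Y' f g))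
        = join _ _ (comp (tau X Y') (fprod P (idm X) f)) (comp (tau X Y') (fprod P (idm X) g))) ->
     (forall X Y (k : KHom M Y Y),
        comp (tau X Y) (fprod P (idm X) (star Y k))
        = star (prod P X Y) (comp (tau X Y) (fprod P (idm X) k))) ->
     @is_KleeneMonad C (@writer_triple C One P M tau Mo e mu)
       (@writer_join C One P M tau Mo e mu join)
       (@writer_bot C One P M tau Mo e mu bot)
       (@writer_star C One P M tau Mo e mu star)).
Proof.
  intro HK. split.
  - intros One P E S. eapply state_ok; eauto.
  - intros One P tau Mo e mu Hst Hmo Hb Hj Hs. eapply writer_ok; eauto.
Qed.
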